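(* Let $n\ge1$. Let $\mathcal{H}=\mathcal{K}=\mathbb{C}^2$, with computational basis $\{|0\rangle,|1\rangle\}$ of $\mathcal{H}$ and an orthonormal basis $\{|+\rangle,|-\rangle\}$ of $\mathcal{K}$. For parameters $\theta_m\in[0,1]$, $\phi_m\in\mathbb{R}$, $\eta_m\in(0,1)$ ($m=0,\dots,n$), observations $q_0,\dots,q_n\in\mathcal{P}_1(\mathcal{K})$ and a state $\varphi_{H,0}$ on $M_2(\mathbb{C})$, define for $(p_0,\dots,p_n)\in\mathcal{P}_1(\mathcal{H})^{n+1}$ \[ F_n(p_0,\dots,p_n)=\varphi_{H,0}\Big(\mathcal{E}_{H;0}\big(\mathcal{E}_{H,O;0}(p_0\otimes q_0)\otimes\mathcal{E}_{H;1}(\mathcal{E}_{H,O;1}(p_1\otimes q_1)\otimes\cdots\otimes\mathcal{E}_{H;n}(\mathcal{E}_{H,O;n}(p_n\otimes q_n)\otimes\mathbb{I})\cdots)\big)\Big), \] with the maps $\mathcal{E}_{H;m},\mathcal{E}_{H,O;m}$ as in the context. Then there exist such parameters, observations and initial state with \[ \sup_{p_0,\dots,p_n\in\mathcal{P}_1(\mathcal{H})}F_n(p_0,\dots,p_n)>\sup_{p_0,\dots,p_n\in D_H}F_n(p_0,\dots,p_n),\qquad D_H=\{|0\rangle\langle0|,|1\rangle\langle1|\}, \] and moreover in any tuple $(p_0^*,\dots,p_n^* )$ attaining the supremum on the left, $p_0^*$ has a nonzero off-diagonal entry in the computational basis.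
   Context: $\mathcal{P}_1(\mathcal{H})$ is the set of rank-one orthogonal projections on $\mathcal{H}$. For each $m$: $\sigma_x=|0\rangle\langle1|+|1\rangle\langle0|$, $U_m=e^{-i\phi_m\sigma_x}$, $\Pi_Z(X)=|0\rangle\langle0|X|0\rangle\langle0|+|1\rangle\langle1|X|1\rangle\langle1|$, $\Phi_m(X)=(1-\theta_m)U_m^\dagger XU_m+\theta_m\Pi_Z(X)$, and $\mathcal{E}_{H;m}:M_2\otimes M_2\to M_2$, $\mathcal{E}_{H;m}(X_1\otimes X_2)=\Phi_m(X_1)\,\mathrm{tr}(X_2)$ with $\mathrm{tr}=\tfrac12\operatorname{Tr}$ the normalized trace. Let $L_m^+=\sqrt{1+\eta_m}\,|0\rangle\langle0|+\sqrt{1-\eta_m}\,|1\rangle\langle1|$, $L_m^-=\sqrt{1-\eta_m}\,|0\rangle\langle0|+\sqrt{1+\eta_m}\,|1\rangle\langle1|$, $W_m^\pm:\mathcal{H}\to\mathcal{H}\otimes\mathcal{K}$, $W_m^\pm\xi=L_m^\pm\xi\otimes|\pm\rangle$, and $\mathcal{E}_{H,O;m}(X)=(W_m^+)^\dagger XW_m^++(W_m^-)^\dagger XW_m^-$ for $X\in\mathcal{B}(\mathcal{H})\otimes\mathcal{B}(\mathcal{K})$; in particular $\mathcal{E}_{H,O;m}(A\otimes|\pm\rangle\langle\pm|)=L_m^\pm AL_m^\pm$. *)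

(* Defs.v *)
From HB Require Import structures.
From mathcomp Require Import all_boot all_order all_algebra.
From mathcomp Require Import reals trigo.
From mathcomp Require Import complex mxtens.

Set Implicit Arguments.
Unset Strict Implicit.
Unset Printing Implicit Defensive.

Import Order.TTheory GRing.Theory Num.Theory.
Local Open Scope ring_scope.
Local Open Scope complex_scope.

Section QDefs.
Variable R : realType.
Local Notation C := R[i].

Definition adj {m n : nat} (A : 'M[C]_(m, n)) : 'M[C]_(n, m) :=
  (map_mx conjc A)^T.

Definition rank_one_proj (p : 'M[C]_2) : Prop :=
  [/\ p *m p = p, adj p = p & \rank p = 1%N].

Definition ntr (X : 'M[C]_2) : C := (\tr X) / 2%:R.

Definition is_state (st : 'M[C]_2 -> C) : Prop :=
  [/\ linear st, (forall X : 'M[C]_2, 0 <= st (adj X *m X)) & st 1%:M = 1].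

Definition ket (k : 'I_2) : 'cV[C]_2 := delta_mx k 0.
Definition proj_ket (k : 'I_2) : 'M[C]_2 := ket k *m adj (ket k).

Definition sigma_x : 'M[C]_2 :=
  ket 0 *m adj (ket 1) + ket 1 *m adj (ket 0).

(* U = exp(-i phi sigma_x) = cos(phi) I - i sin(phi) sigma_x  (sigma_x^2 = I). *)
Definition Umx (ph : R) : 'M[C]_2 :=
  (cos ph)%:C%:M - ('i * (sin ph)%:C) *: sigma_x.

Definition PiZ (X : 'M[C]_2) : 'M[C]_2 :=
  proj_ket 0 *m X *m proj_ket 0 + proj_ket 1 *m X *m proj_ket 1.

Definition Phi (th ph : R) (X : 'M[C]_2) : 'M[C]_2 :=
  (1 - th)%:C *: (adj (Umx ph) *m X *m Umx ph) + th%:C *: PiZ X.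

(* E_{H;m}(X1 (x) X2) = Phi_m(X1) tr(X2), given on elementary tensors. *)
Definition EH (th ph : R) (X1 X2 : 'M[C]_2) : 'M[C]_2 :=
  ntr X2 *: Phi th ph X1.

Definition Lp (et : R) : 'M[C]_2 :=
  (Num.sqrt (1 + et))%:C *: proj_ket 0 + (Num.sqrt (1 - et))%:C *: proj_ket 1.
Definition Lm (et : R) : 'M[C]_2 :=
  (Num.sqrt (1 - et))%:C *: proj_ket 0 + (Num.sqrt (1 + et))%:C *: proj_ket 1.

(* The orthonormal basis {|+>, |->} of K = C^2, taken as its coordinate basis:
   |+> = first basis vector, |-> = second basis vector of K. *)
Definition ketp : 'cV[C]_2 := delta_mx 0 0.
Definition ketm : 'cV[C]_2 := delta_mx 1 0.

Definition Wp (et : R) : 'M[C]_(2 * 2, 2 * 1) := Lp et *t ketp.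
Definition Wm (et : R) : 'M[C]_(2 * 2, 2 * 1) := Lm et *t ketm.

Definition EHO (et : R) (X : 'M[C]_(2 * 2)) : 'M[C]_2 :=
  castmx (muln1 2, muln1 2)
    (adj (Wp et) *m X *m Wp et + adj (Wm et) *m X *m Wm et).

Definition Fn (n : nat) (th ph et : 'I_n.+1 -> R) (q : 'I_n.+1 -> 'M[C]_2)
  (st : 'M[C]_2 -> C) (p : 'I_n.+1 -> 'M[C]_2) : C :=
  st (foldr (fun (m : nat) (acc : 'M[C]_2) =>
           EH (th (inord m)) (ph (inord m))
              (EHO (et (inord m)) (p (inord m) *t q (inord m))) acc)
        1%:M (iota 0 n.+1)).

Definition in_DH (p : 'M[C]_2) : Prop := exists k : 'I_2, p = proj_ket k.

End QDefs.

(* Main.v *)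
Require Import Defs.
From HB Require Import structures.
From mathcomp Require Import all_boot all_order all_algebra.
From mathcomp Require Import reals trigo.
From mathcomp Require Import complex mxtens.
From mathcomp Require Import ring lra.
Import Order.TTheory GRing.Theory Num.Theory.
Local Open Scope ring_scope.
Local Open Scope complex_scope.

Section Aux.
Variable R : realType.
Local Notation C := R[i].

Lemma ord2P (i : 'I_2) : i = 0 \/ i = 1.
Proof. case: i => [[|[|k]] Hk]; [left|right|]; try exact: val_inj. by []. Qed.

Lemma proj_ketE (k : 'I_2) : proj_ket R k = delta_mx k k :> 'M[C]_2.
Proof.
apply/matrixP=> i j; rewrite /proj_ket /ket /adj !mxE big_ord1 !mxE.
rewrite conjc_nat -natrM mulnb !eqxx !andbT.
by [].
Qed.

Lemma adjK m n (A : 'M[C]_(m,n)) : adj (adj A) = A.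
Proof. by apply/matrixP=> i j; rewrite !mxE conjcK. Qed.

Lemma adj_tens m n p q (A : 'M[C]_(m,n)) (B : 'M[C]_(p,q)) :
  adj (A *t B) = adj A *t adj B.
Proof. by rewrite /adj map_mxT trmx_tens. Qed.

Lemma adjM m n p (A : 'M[C]_(m,n)) (B : 'M[C]_(n,p)) :
  adj (A *m B) = adj B *m adj A.
Proof. by rewrite /adj map_mxM trmx_mul. Qed.

Lemma adj1 n : adj (1%:M : 'M[C]_n) = 1%:M.
Proof. by apply/matrixP=> i j; rewrite !mxE conjc_nat eq_sym. Qed.

Lemma Umx0 : Umx (0:R) = 1%:M :> 'M[C]_2.
Proof. by rewrite /Umx cos0 sin0 mulr0 scale0r subr0. Qed.

Lemma Phi00 (X : 'M[C]_2) : Phi 0 0 X = X.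
Proof. by rewrite /Phi Umx0 adj1 mulmx1 mul1mx subr0 scale1r scale0r addr0. Qed.


Lemma conjR (x : R) : Num.conj (x%:C : C) = x%:C.
Proof. exact: conjc_real. Qed.

Lemma conj_rb (x : R) (b : bool) : Num.conj (x%:C * b%:R : C) = x%:C * b%:R.
Proof. by rewrite rmorphM /= conjR conjC_nat. Qed.

Lemma conjc_rb (x : R) (b : bool) : conjc (x%:C * b%:R : C) = x%:C * b%:R.
Proof.
case: b => /=; rewrite ?mulr1n ?mulr0n ?mulr1 ?mulr0.
  by rewrite subr0 addr0 oppr0.
by rewrite subrr addr0 oppr0.
Qed.

Lemma conjcD' (x y : C) : conjc (x + y) = conjc x + conjc y.
Proof. by case: x => a b; case: y => c d; rewrite /= opprD. Qed.

Lemma adjLp (e : R) : adj (Lp e) = Lp e.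
Proof.
apply/matrixP=> i j; rewrite /Lp !proj_ketE !mxE.
rewrite conjcD' !conjc_rb.
by rewrite (andbC (j == 0)) (andbC (j == 1)).
Qed.

Lemma kpkp : adj (ketp R) *m ketp R = 1%:M.
Proof.
apply/matrixP=> i j; rewrite (ord1 i) (ord1 j) !mxE.
rewrite !big_ord_recr big_ord0 /= !mxE /=.
by rewrite !oppr0 !mulr0 mulr1 add0r addr0.
Qed.

Lemma kmkp : adj (ketm R) *m ketp R = 0.
Proof.
apply/matrixP=> i j; rewrite (ord1 i) (ord1 j) !mxE.
rewrite !big_ord_recr big_ord0 /= !mxE /=.
by rewrite !oppr0 !mulr0 mulr1 !add0r.
Qed.

Lemma EHOE (e : R) (A : 'M[C]_2) :
  EHO e (A *t (ketp R *m adj (ketp R))) = Lp e *m A *m Lp e.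
Proof.
rewrite /EHO /Wp /Wm !adj_tens !tensmx_mul.
have h1 : adj (ketp R) *m (ketp R *m adj (ketp R)) *m ketp R = 1%:M.
  by rewrite mulmxA kpkp mul1mx kpkp.
have h2 : adj (ketm R) *m (ketp R *m adj (ketp R)) *m ketm R = 0.
  by rewrite mulmxA kmkp !mul0mx.
rewrite h1 h2 tensmx0 addr0 tens_mx_scalar scale1r castmx_comp castmx_id.
by rewrite adjLp.
Qed.


Definition lc (e : R) (k : 'I_2) : C :=
  if k == 0 then (Num.sqrt (1 + e))%:C else (Num.sqrt (1 - e))%:C.

Lemma w0 : widen_ord (leqnSn 1) ord_max = 0 :> 'I_2.
Proof. exact: val_inj. Qed.
Lemma om1 : ord_max = 1 :> 'I_2.
Proof. exact: val_inj. Qed.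

Lemma sum2 (F : 'I_2 -> C) : \sum_(k < 2) F k = F 0 + F 1.
Proof. by rewrite !big_ord_recr big_ord0 /= w0 om1 add0r. Qed.

Lemma LALE (e : R) (A : 'M[C]_2) i j :
  (Lp e *m A *m Lp e) i j = lc e i * lc e j * A i j.
Proof.
rewrite /Lp !proj_ketE mxE sum2 !mxE !sum2 !mxE /lc.
by case: (ord2P i) => ->; case: (ord2P j) => -> /=; rewrite ?mulr1n ?mulr0n; ring.
Qed.


Definition st (X : 'M[C]_2) : C := (X 0 0 + X 0 1 + X 1 0 + X 1 1) / 2%:R.

Lemma st_lin : linear st.
Proof.
move=> a u v; rewrite /st !mxE -[a *: _]/(a * _); ring.
Qed.

Lemma stZ (c : C) X : st (c *: X) = c * st X.
Proof. by rewrite /st !mxE; ring. Qed.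

Lemma st_pos (X : 'M[C]_2) : 0 <= st (adj X *m X).
Proof.
rewrite /st !mxE !sum2 !mxE.
set s0 := X 0 0 + X 0 1; set s1 := X 1 0 + X 1 1.
have -> : conjc (X 0 0) * X 0 0 + conjc (X 1 0) * X 1 0 +
  (conjc (X 0 0) * X 0 1 + conjc (X 1 0) * X 1 1) +
  (conjc (X 0 1) * X 0 0 + conjc (X 1 1) * X 1 0) +
  (conjc (X 0 1) * X 0 1 + conjc (X 1 1) * X 1 1) = s0 * conjc s0 + s1 * conjc s1.
  by rewrite /s0 /s1 !conjcD'; ring.
by apply: divr_ge0; [apply: addr_ge0; apply: mulcJ_ge0 | apply: ler0n].
Qed.

Lemma st1 : st 1%:M = 1.
Proof. by rewrite /st !mxE /=; field. Qed.


Definition f0 (e : R) (P : 'M[C]_2) := st (Lp e *m P *m Lp e).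
Definition g (e : R) (P : 'M[C]_2) := ntr (Lp e *m P *m Lp e).

Lemma f0E e P : f0 e P = (lc e 0 * lc e 0 * P 0 0 + lc e 0 * lc e 1 * P 0 1
   + lc e 1 * lc e 0 * P 1 0 + lc e 1 * lc e 1 * P 1 1) / 2%:R.
Proof. by rewrite /f0 /st !LALE. Qed.

Lemma gE e P : g e P = (lc e 0 * lc e 0 * P 0 0 + lc e 1 * lc e 1 * P 1 1) / 2%:R.
Proof. by rewrite /g /ntr /mxtrace sum2 !LALE. Qed.

Definition acc n (e : R) (p : 'I_n.+1 -> 'M[C]_2) (s : seq nat) : 'M[C]_2 :=
  foldr (fun m a => ntr a *: (Lp e *m p (inord m) *m Lp e)) 1%:M s.
Arguments acc {n}.

Lemma ntr_acc_cons n (e : R) (p : 'I_n.+1 -> 'M[C]_2) m s :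
  ntr (acc e p (m :: s)) = ntr (acc e p s) * g e (p (inord m)).
Proof. by rewrite /= /ntr mxtraceZ mulrA. Qed.

Lemma ntr_acc_nil n (e : R) (p : 'I_n.+1 -> 'M[C]_2) : ntr (acc e p [::]) = 1.
Proof. by rewrite /= /ntr mxtrace1; field. Qed.

Lemma FnE n (e : R) (p : 'I_n.+1 -> 'M[C]_2) :
  Fn (fun _ => 0) (fun _ => 0) (fun _ => e) (fun _ => ketp R *m adj (ketp R)) st p
  = ntr (acc e p (iota 1 n)) * f0 e (p ord0).
Proof.
have H : forall s, foldr (fun (m : nat) (a : 'M[C]_2) =>
           EH ((fun _ => 0) (inord m : 'I_n.+1)) ((fun _ => 0) (inord m : 'I_n.+1))
              (EHO ((fun _ => e) (inord m : 'I_n.+1)) (p (inord m) *t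
                  (fun _ => ketp R *m adj (ketp R)) (inord m : 'I_n.+1))) a)
        1%:M s = acc e p s.
  elim=> [|m s IH] //=; by rewrite IH /EH Phi00 EHOE.
rewrite /Fn H /= stZ.
have -> : (inord 0 : 'I_n.+1) = ord0 by apply: val_inj; rewrite /= inordK.
by [].
Qed.


Lemma rCM (x y : R) : x%:C * y%:C = (x * y)%:C :> C.
Proof. by rewrite rmorphM. Qed.
Lemma rCD (x y : R) : x%:C + y%:C = (x + y)%:C :> C.
Proof. by rewrite rmorphD. Qed.
Lemma rCdiv2 (x : R) : x%:C / 2%:R = (x / 2%:R)%:C :> C.
Proof. by rewrite rmorphM fmorphV rmorph_nat. Qed.
Lemma rC0 : (0 : C) = (0 : R)%:C.
Proof. by rewrite rmorph0. Qed.
Lemma rC1 : (1 : C) = (1 : R)%:C.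
Proof. by rewrite rmorph1. Qed.

Lemma r1 (P : 'M[C]_2) : rank_one_proj P ->
 [/\ P 0 0 = P 0 0 * P 0 0 + P 0 1 * P 1 0,
     P 1 1 = P 1 0 * P 0 1 + P 1 1 * P 1 1,
     P 1 0 = conjc (P 0 1),
     conjc (P 0 0) = P 0 0 & conjc (P 1 1) = P 1 1].
Proof.
case=> hpp hadj hr.
have e00 := congr1 (fun M : 'M[C]_2 => M 0 0) hpp.
have e11 := congr1 (fun M : 'M[C]_2 => M 1 1) hpp.
have a10 := congr1 (fun M : 'M[C]_2 => M 1 0) hadj.
have a00 := congr1 (fun M : 'M[C]_2 => M 0 0) hadj.
have a11 := congr1 (fun M : 'M[C]_2 => M 1 1) hadj.
move: e00 e11 a10 a00 a11; rewrite /= !mxE !sum2 => e00 e11 a10 a00 a11.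
by split.
Qed.

Lemma r1_ge0 (P : 'M[C]_2) : rank_one_proj P -> 0 <= P 0 0 /\ 0 <= P 1 1.
Proof.
move=> hP; have [h00 h11 h10 c00 c11] := r1 P hP.
split.
  have -> : P 0 0 = P 0 0 * conjc (P 0 0) + P 0 1 * conjc (P 0 1).
    by rewrite c00 -h10 {1}h00.
  by apply: addr_ge0; apply: mulcJ_ge0.
have -> : P 1 1 = P 0 1 * conjc (P 0 1) + P 1 1 * conjc (P 1 1).
  by rewrite c11 -h10 mulrC {1}h11.
by apply: addr_ge0; apply: mulcJ_ge0.
Qed.


Lemma lc00 (e : R) : -1 <= e -> lc e 0 * lc e 0 = (1 + e)%:C.
Proof. by move=> he; rewrite /lc /= rCM -expr2 sqr_sqrtr // -lerBlDl sub0r. Qed.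
Lemma lc11 (e : R) : e <= 1 -> lc e 1 * lc e 1 = (1 - e)%:C.
Proof. by move=> he; rewrite /lc /= rCM -expr2 sqr_sqrtr // subr_ge0. Qed.

Lemma P0 (P : 'M[C]_2) : P 0 0 = 0 -> P 0 1 = 0 -> P 1 0 = 0 -> P 1 1 = 0 -> P = 0.
Proof.
move=> a b c d; apply/matrixP=> i j; rewrite mxE.
by case: (ord2P i) => ->; case: (ord2P j) => ->.
Qed.

Lemma g_gt0 (e : R) (P : 'M[C]_2) : -1 < e < 1 -> rank_one_proj P -> 0 < g e P.
Proof.
case/andP=> he1 he2 hP.
have [h00 h11 h10 c00 c11] := r1 P hP.
have [g0 g1] := r1_ge0 P hP.
have ha : (0 : C) < (1 + e)%:C by rewrite rC0 ltcR; lra.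
have hb : (0 : C) < (1 - e)%:C by rewrite rC0 ltcR; lra.
rewrite gE lc00 ?lc11; [|lra|lra].
rewrite lt0r; apply/andP; split; last first.
  by apply: divr_ge0; [apply: addr_ge0; apply: mulr_ge0 => //; apply: ltW|apply: ler0n].
apply/negP=> /eqP hz.
have hs : (1 + e)%:C * P 0 0 + (1 - e)%:C * P 1 1 = 0.
  by move: hz => /eqP; rewrite mulf_eq0 invr_eq0 pnatr_eq0 orbF => /eqP.
have ha0 : (1 + e)%:C != 0 :> C by rewrite gt_eqF.
have hb0 : (1 - e)%:C != 0 :> C by rewrite gt_eqF.
move/eqP: hs; rewrite paddr_eq0; last first.
- by apply: mulr_ge0 => //; apply: ltW.
- by apply: mulr_ge0 => //; apply: ltW.
rewrite !mulf_eq0 (negbTE ha0) (negbTE hb0) /= => /andP[/eqP z00 /eqP z11].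
have z01 : P 0 1 = 0.
  move: h00; rewrite z00 h10 mulr0 add0r => /esym/eqP.
  by rewrite mulf_eq0 conjc_eq0 orbb => /eqP.
have z10 : P 1 0 = 0 by rewrite h10 z01 conjc0.
case: hP => _ _; rewrite (P0 P z00 z01 z10 z11) mxrank0 => h.
by [].
Qed.


Lemma proj_r1 (k : 'I_2) : rank_one_proj (proj_ket R k).
Proof.
rewrite proj_ketE; split.
- by rewrite mul_delta_mx.
- apply/matrixP=> i j; rewrite !mxE conjc_nat.
  by rewrite andbC.
- exact: mxrank_delta.
Qed.

Definition vv : 'M[C]_2 := const_mx ((2%:R^-1 : R)%:C).

Lemma vv_r1 : rank_one_proj vv.
Proof.
split.
- by apply/matrixP=> i j; rewrite !mxE sum2 !mxE rCM rCD; congr (_%:C); field.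
- by apply/matrixP=> i j; rewrite !mxE conjc_real.
- have -> : vv = (const_mx 1 : 'M[C]_(2,1)) *m const_mx ((2%:R^-1 : R)%:C).
    by apply/matrixP=> i j; rewrite !mxE big_ord_recl big_ord0 !mxE mul1r addr0.
  apply/eqP; rewrite eqn_leq; apply/andP; split.
    exact: leq_trans (mxrankM_maxl _ _) (rank_leq_col _).
  rewrite lt0n mxrank_eq0; apply/eqP=> /matrixP/(_ 0 0).
  rewrite !mxE big_ord_recl big_ord0 !mxE mul1r addr0 => /eqP.
  by rewrite rC0 eq_complex /= eqxx andbT invr_eq0 pnatr_eq0.
Qed.


Definition e0 : R := 2%:R^-1.
Definition sa : R := Num.sqrt (1 + e0).
Definition sb : R := Num.sqrt (1 - e0).

Lemma e0_bounds : 0 < e0 < 1.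
Proof. rewrite /e0; apply/andP; split; lra. Qed.

Lemma saa : sa * sa = 1 + e0.
Proof. by rewrite /sa -expr2 sqr_sqrtr //; have := e0_bounds; case/andP=> *; lra. Qed.
Lemma sbb : sb * sb = 1 - e0.
Proof. by rewrite /sb -expr2 sqr_sqrtr //; have := e0_bounds; case/andP=> *; lra. Qed.
Lemma sab : 2%:R^-1 < sa * sb.
Proof.
have ha : 0 <= sa by exact: sqrtr_ge0.
have hb : 0 <= sb by exact: sqrtr_ge0.
have h : (sa * sb) * (sa * sb) = (1 + e0) * (1 - e0).
  by rewrite -saa -sbb; ring.
have ht : 0 <= sa * sb by exact: mulr_ge0.
move: h ht; rewrite /e0; set t := sa * sb => h ht; nra.
Qed.

Lemma diag_f0 (P : 'M[C]_2) : P 0 1 = 0 -> P 1 0 = 0 ->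
  f0 e0 P = (1 + e0)%:C * P 0 0 / 2%:R + (1 - e0)%:C * P 1 1 / 2%:R.
Proof.
move=> h01 h10; rewrite f0E h01 h10 lc00 ?lc11; first by rewrite !mulr0 !addr0 mulrDl.
all: have := e0_bounds; case/andP=> *; lra.
Qed.

Lemma gE' (P : 'M[C]_2) :
  g e0 P = (1 + e0)%:C * P 0 0 / 2%:R + (1 - e0)%:C * P 1 1 / 2%:R.
Proof.
rewrite gE lc00 ?lc11; first by rewrite mulrDl.
all: have := e0_bounds; case/andP=> *; lra.
Qed.

Lemma f0_vv : f0 e0 vv =
  ((sa * sa * e0 + sa * sb * e0 + sb * sa * e0 + sb * sb * e0) / 2%:R)%:C.
Proof. by rewrite f0E !mxE /lc /= !rCM !rCD rCdiv2. Qed.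

Lemma f0_vv_gt (x : R) : x <= (1 + e0) / 2%:R -> x%:C < f0 e0 vv.
Proof.
move=> hx; rewrite f0_vv ltcR (mulrC sb sa) saa sbb.
have := sab; have := e0_bounds; move: hx; rewrite /e0 => hx /andP[h1 h2] h3.
nra.
Qed.


Lemma diag_lt (P : 'M[C]_2) : P 0 1 = 0 -> P 1 0 = 0 ->
  (P 0 0 = 0 \/ P 0 0 = 1) -> (P 1 1 = 0 \/ P 1 1 = 1) ->
  ~ (P 0 0 = 1 /\ P 1 1 = 1) -> f0 e0 P < f0 e0 vv.
Proof.
move=> h01 h10 [] a [] b hn; rewrite diag_f0 // a b.
- rewrite !mulr0 !mul0r addr0 rC0; apply: f0_vv_gt.
  have := e0_bounds; case/andP=> *; lra.
- rewrite !mulr0 !mul0r add0r mulr1 rCdiv2; apply: f0_vv_gt.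
  have := e0_bounds; case/andP=> *; lra.
- rewrite !mulr0 !mul0r addr0 mulr1 rCdiv2; apply: f0_vv_gt; lra.
- by case: hn.
Qed.

Lemma idem01 (x : C) : x = x * x -> x = 0 \/ x = 1.
Proof.
move=> h; have : x * (x - 1) == 0 by rewrite mulrBr mulr1 -h subrr.
by rewrite mulf_eq0 subr_eq0 => /orP[] /eqP; [left|right].
Qed.

Lemma g_proj (k : 'I_2) : 0 < g e0 (proj_ket R k) /\ g e0 (proj_ket R k) <= g e0 (proj_ket R 0).
Proof.
split; first by apply: g_gt0; [have := e0_bounds; case/andP=> *; apply/andP; split; lra | exact: proj_r1].
rewrite !gE' !proj_ketE !mxE /=.
case: (ord2P k) => -> /=; first by [].
rewrite !mulr0 !mul0r addr0 add0r !mulr1 !rCdiv2 lecR.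
have := e0_bounds; case/andP=> *; lra.
Qed.

Lemma acc_ext n (e : R) (p p' : 'I_n.+1 -> 'M[C]_2) s :
  (forall m, m \in s -> p (inord m) = p' (inord m)) -> acc e p s = acc e p' s.
Proof.
elim: s => //= m s IH h.
rewrite IH ?h ?mem_head // => k hk; apply: h; by rewrite in_cons hk orbT.
Qed.

Lemma acc_pos n (e : R) (p : 'I_n.+1 -> 'M[C]_2) s :
  (forall m, m \in s -> 0 < g e (p (inord m))) -> 0 < ntr (acc e p s).
Proof.
elim: s => [|m s IH] h; first by rewrite ntr_acc_nil ltr01.
rewrite ntr_acc_cons; apply: mulr_gt0.
  by apply: IH => k hk; apply: h; rewrite in_cons hk orbT.
by apply: h; rewrite mem_head.
Qed.

Lemma acc_mono n (e : R) (d p : 'I_n.+1 -> 'M[C]_2) s :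
  (forall m, m \in s -> 0 < g e (d (inord m)) /\ g e (d (inord m)) <= g e (p (inord m))) ->
  ntr (acc e d s) <= ntr (acc e p s).
Proof.
elim: s => [|m s IH] h; first by rewrite !ntr_acc_nil.
rewrite !ntr_acc_cons; apply: ler_pM.
- apply: ltW; apply: acc_pos => k hk; have [] := h k; by [rewrite in_cons hk orbT|].
- by have [/ltW] := h m (mem_head _ _).
- by apply: IH => k hk; apply: h; rewrite in_cons hk orbT.
- by have [] := h m (mem_head _ _).
Qed.

Lemma inord_neq0 n m : m \in iota 1 n -> (inord m : 'I_n.+1) != ord0.
Proof.
rewrite mem_iota => /andP[h1 h2]; apply/eqP => /(congr1 val) /=.
rewrite inordK; last by rewrite add1n in h2.
by move=> h; rewrite h in h1.
Qed.


Arguments acc_mono {n e d p s}.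
Arguments acc_pos {n e p s}.
Arguments inord_neq0 {n m}.
Arguments acc_ext {n e p p' s}.

Lemma main_aux (n : nat) (hn : (1 <= n)%N) :
  exists (th ph et : 'I_n.+1 -> R) (q : 'I_n.+1 -> 'M[R[i]]_2)
         (st : 'M[R[i]]_2 -> R[i]),
    [/\ (forall m, 0 <= th m <= 1) /\ (forall m, 0 < et m < 1),
        (forall m, rank_one_proj (q m)),
        is_state st,
        (exists p : 'I_n.+1 -> 'M[R[i]]_2,
            (forall m, rank_one_proj (p m)) /\
            (forall d : 'I_n.+1 -> 'M[R[i]]_2, (forall m, in_DH (d m)) ->
               Fn th ph et q st d < Fn th ph et q st p))
      & (forall p : 'I_n.+1 -> 'M[R[i]]_2,
            (forall m, rank_one_proj (p m)) ->
            (forall p' : 'I_n.+1 -> 'M[R[i]]_2, (forall m, rank_one_proj (p' m)) ->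
               Fn th ph et q st p' <= Fn th ph et q st p) ->
            exists i j : 'I_2, i != j /\ p ord0 i j != 0)].
Proof.
have eb := e0_bounds.
exists (fun _ => 0), (fun _ => 0), (fun _ => e0),
  (fun _ => ketp R *m adj (ketp R)), st.
split.
- by split=> m //; rewrite lexx ler01.
- by move=> m; exact: (proj_r1 0).
- by split; [exact: st_lin | exact: st_pos | exact: st1].
- pose pS := fun m : 'I_n.+1 => if m == ord0 then vv else proj_ket R 0.
  exists pS; split.
    by move=> m; rewrite /pS; case: (m == ord0); [exact: vv_r1 | exact: proj_r1].
  move=> d hd; rewrite !FnE /pS eqxx.
  have hg : forall m : nat, m \in iota 1 n -> 0 < g e0 (d (inord m)) /\
     g e0 (d (inord m)) <= g e0 (pS (inord m)).
    move=> m hm; rewrite /pS /= (negbTE (inord_neq0 hm)).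
    by have [k ->] := hd (inord m); exact: g_proj.
  have hA := acc_mono hg.
  have hA0 : 0 < ntr (acc e0 d (iota 1 n)).
    by apply: acc_pos => m hm; case: (hg m hm).
  have hf : f0 e0 (d ord0) < f0 e0 vv.
    have [k ->] := hd ord0; rewrite proj_ketE.
    have o10 : (1 : C) <> 0 by apply/eqP; exact: oner_neq0.
    case: (ord2P k) => ->; apply: diag_lt; rewrite ?mxE /= ?mulr1n ?mulr0n //;
      try by [left|right]; by move=> [a b]; apply: o10.
  apply: (lt_le_trans (y := ntr (acc e0 d (iota 1 n)) * f0 e0 vv)).
    by rewrite ltr_pM2l.
  apply: ler_wpM2r => //.
  by apply: ltW; rewrite rC0; apply: f0_vv_gt; lra.
- move=> p hp hmax.
  case: (eqVneq (p ord0 0 1) 0) => h01; last by exists 0, 1.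
  case: (eqVneq (p ord0 1 0) 0) => h10; last by exists 1, 0.
  exfalso.
  have [h00 h11 _ _ _] := r1 (p ord0) (hp ord0).
  rewrite h01 h10 mul0r addr0 in h00.
  rewrite h01 h10 mul0r add0r in h11.
  have hlt : f0 e0 (p ord0) < f0 e0 vv.
    apply: diag_lt => //; [exact: idem01|exact: idem01|].
    move=> [a b]; case: (hp ord0) => _ _.
    have -> : p ord0 = 1%:M.
      apply/matrixP=> i j; rewrite !mxE.
      by case: (ord2P i) => ->; case: (ord2P j) => -> /=.
    by rewrite mxrank1.
  pose p' := fun m : 'I_n.+1 => if m == ord0 then vv else p m.
  have hp' : forall m, rank_one_proj (p' m).
    by move=> m; rewrite /p'; case: (m == ord0); [exact: vv_r1 | exact: hp].
  have E : acc e0 p' (iota 1 n) = acc e0 p (iota 1 n).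
    by apply: acc_ext => m hm; rewrite /p' (negbTE (inord_neq0 hm)).
  have E0 : p' ord0 = vv by rewrite /p' eqxx.
  have := hmax p' hp'; rewrite !FnE E E0.
  have hA0 : 0 < ntr (acc e0 p (iota 1 n)).
    apply: acc_pos => m _; apply: g_gt0 => //.
    by case/andP: eb => ? ?; apply/andP; split; lra.
  have h2 : ntr (acc e0 p (iota 1 n)) * f0 e0 (p ord0) <
            ntr (acc e0 p (iota 1 n)) * f0 e0 vv by rewrite ltr_pM2l.
  by move=> hle; have := lt_le_trans h2 hle; rewrite ltxx.
Qed.

End Aux.

Theorem mainTheorem3 (R : realType) (n : nat) (hn : (1 <= n)%N) :
  exists (th ph et : 'I_n.+1 -> R) (q : 'I_n.+1 -> 'M[R[i]]_2)
         (st : 'M[R[i]]_2 -> R[i]),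
    [/\ (forall m, 0 <= th m <= 1) /\ (forall m, 0 < et m < 1),
        (forall m, rank_one_proj (q m)),
        is_state st,
        (* sup over P_1(H)^{n+1} strictly exceeds the (finite) sup over D_H^{n+1} *)
        (exists p : 'I_n.+1 -> 'M[R[i]]_2,
            (forall m, rank_one_proj (p m)) /\
            (forall d : 'I_n.+1 -> 'M[R[i]]_2, (forall m, in_DH (d m)) ->
               Fn th ph et q st d < Fn th ph et q st p))
      & (* every maximizer has p_0 with a nonzero off-diagonal entry *)
        (forall p : 'I_n.+1 -> 'M[R[i]]_2,
            (forall m, rank_one_proj (p m)) ->
            (forall p' : 'I_n.+1 -> 'M[R[i]]_2, (forall m, rank_one_proj (p' m)) ->
               Fn th ph et q st p' <= Fn th ph et q st p) ->
            exists i j : 'I_2, i != j /\ p ord0 i j != 0)].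
Proof. exact: main_aux. Qed.
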